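(* For every $N\ge 1$ and every integer $r\ge 0$, $$\Pr[\mathcal{R}_2(N)=r]=\frac{1}{(N-1)!}\left[{N-1\atop r}\right],$$ where $\left[{m\atop r}\right]$ denotes the unsigned Stirling number of the first kind (the number of permutations of $\{1,\dots,m\}$ with exactly $r$ cycles, with $\left[{0\atop 0}\right]=1$).
   Context: A random recursive hypergraph (RRH) is the random hypergraph process defined as follows. At size $N=1$ it has vertex set $\{v_1\}$ and edge set $\{\{v_1\}\}$. Given the hypergraph of size $N$ (vertices $v_1,\dots,v_N$, exactly $N$ edges), one chooses an existing edge $e$ uniformly at random, independently of the past, and adds a new vertex $v_{N+1}$ together with the new edge $e\cup\{v_{N+1}\}$. The rank of a vertex $v$ is $\min\{|e| : v\in e\}$. $\mathcal{R}_k(N)$ denotes the number of vertices of rank $k$ in the RRH of size $N$ (equivalently, the number of edges of size $k$). *)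

(* Defs.v *)
From mathcomp Require Import all_boot all_order all_algebra all_fingroup.
Set Implicit Arguments. Unset Strict Implicit. Unset Printing Implicit Defensive.

(* Vertices are labelled 0, ..., N-1 (v_{i+1} is labelled i); a hypergraph of
   size N is the list of its edges e_1, ..., e_N (edge e_{i+1} at position i),
   each edge being the list of the labels of its vertices.
   [c j] (for j < i) is the 0-based index of the edge chosen when going from
   size j+1 to size j+2; it must satisfy c j <= j. *)
Fixpoint rrh (n : nat) (c : nat -> nat) : seq (seq nat) :=
  match n with
  | 0 => [:: [:: 0]]
  | n'.+1 => let E := rrh n' c in rcons E (rcons (nth [::] E (c n')) n)
  end.
(* rrh n c is the hypergraph of size n.+1 *)

(* rank of vertex v: min size of an edge containing v (every vertex lies in
   some edge; the default [(size E).+1] is never attained). *)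
Definition vrank (E : seq (seq nat)) (v : nat) : nat :=
  foldr minn (size E).+1 [seq size e | e <- E & v \in e].

Definition Rk (k : nat) (E : seq (seq nat)) : nat :=
  count (fun v => vrank E v == k) (iota 0 (size E)).

Definition choice_seq (m : nat) (c : {ffun 'I_m -> nat}) : nat -> nat :=
  fun i => match insub i with Some j => c j | None => 0 end.

Definition valid_choice (m : nat) (c : {ffun 'I_m -> 'I_m.+1}) : bool :=
  [forall i : 'I_m, (c i <= i)%N].

Definition rrh_of (N : nat) (c : {ffun 'I_N.-1 -> 'I_N.-1.+1}) :=
  rrh N.-1 (choice_seq [ffun i => nat_of_ord (c i)]).

(* Pr[R_k(N) = r]: each valid choice vector c has probability
   prod_{i < N-1} 1/(i+1) (independent uniform choices). *)
Definition prob_Rk (k N r : nat) : rat :=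
  (\sum_(c : {ffun 'I_N.-1 -> 'I_N.-1.+1} | valid_choice c && (Rk k (rrh_of c) == r))
     \prod_(i < N.-1) (i.+1%:R)^-1)%R.

Definition stirling1 (m r : nat) : nat := #|[set s : 'S_m | #|porbits s| == r]|.

(* Main.v *)
Require Import Defs.
From mathcomp Require Import all_boot all_order all_algebra all_fingroup zify.
Set Implicit Arguments. Unset Strict Implicit. Unset Printing Implicit Defensive.

Section Hyp.
Variable c : nat -> nat.
Hypothesis hc : forall j, c j <= j.

Lemma size_rrh n : size (rrh n c) = n.+1.
Proof. by elim: n => //= n IH; rewrite size_rcons IH. Qed.

Lemma nth_rrh n i : i <= n -> nth [::] (rrh n c) i = nth [::] (rrh i c) i.
Proof.
elim: n => [|n IH]; first by rewrite leqn0 => /eqP ->.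
rewrite leq_eqVlt => /orP [/eqP -> //|Hi].
by rewrite /= nth_rcons size_rrh Hi IH.
Qed.

Definition e i := nth [::] (rrh i c) i.

Lemma e0 : e 0 = [:: 0]. Proof. by []. Qed.
Lemma eS i : e i.+1 = rcons (e (c i)) i.+1.
Proof. by rewrite /e /= nth_rcons size_rrh ltnn eqxx nth_rrh. Qed.

Lemma e_strong (P : nat -> Prop) : P 0 -> (forall i, (forall j, j <= i -> P j) -> P i.+1) -> forall i, P i.
Proof.
move=> H0 HS i; elim: i {-2}i (leqnn i) => [|i IH] j.
  by rewrite leqn0 => /eqP ->.
rewrite leq_eqVlt => /orP [/eqP ->|]; last exact: IH.
by apply: HS => k Hk; apply: IH.
Qed.

Lemma size_e_pos i : 0 < size (e i).
Proof. by case: i => [|i]; rewrite ?eS ?size_rcons. Qed.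

Lemma size_e_le i : size (e i) <= i.+1.
Proof.
elim/e_strong: i => // i IH; rewrite eS size_rcons ltnS.
by apply: leq_trans (IH _ (hc i)) _; rewrite ltnS.
Qed.

Lemma mem_e_le i v : v \in e i -> v <= i.
Proof.
elim/e_strong: i v => [v|i IH v]; first by rewrite e0 inE => /eqP ->.
rewrite eS mem_rcons inE => /orP [/eqP -> //|/IH] H.
by apply: leq_trans (H (hc i)) (leq_trans (hc i) (leqnSn i)).
Qed.

Lemma mem_e_size i v : v \in e i -> size (e v) <= size (e i).
Proof.
elim/e_strong: i v => [v|i IH v]; first by rewrite e0 inE => /eqP ->.
rewrite eS mem_rcons inE => /orP [/eqP ->|/IH H]; first by rewrite -eS.
by rewrite size_rcons; apply: leq_trans (H (hc i)) (leqnSn _).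
Qed.

Lemma e_self i : i \in e i.
Proof. by case: i => [|i]; rewrite ?eS ?mem_rcons inE eqxx. Qed.

Lemma foldr_minn_le (L : seq nat) d x : x \in L -> foldr minn d L <= x.
Proof.
elim: L => // y L IH; rewrite inE => /orP [/eqP ->|/IH H] /=; first exact: geq_minl.
exact: leq_trans (geq_minr _ _) H.
Qed.

Lemma foldr_minn_ge (L : seq nat) d x :
  x <= d -> (forall y, y \in L -> x <= y) -> x <= foldr minn d L.
Proof.
move=> Hd; elim: L => //= y L IH H; rewrite leq_min H ?inE ?eqxx //=.
by apply: IH => z Hz; apply: H; rewrite inE Hz orbT.
Qed.

Lemma foldr_minn_eq (L : seq nat) d x :
  x \in L -> x <= d -> (forall y, y \in L -> x <= y) -> foldr minn d L = x.
Proof.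
move=> H1 H2 H3; apply/eqP; rewrite eqn_leq foldr_minn_le //=.
exact: foldr_minn_ge.
Qed.

Lemma vrank_e n v : v <= n -> vrank (rrh n c) v = size (e v).
Proof.
move=> Hv; rewrite /vrank size_rrh; apply: foldr_minn_eq.
- apply/mapP; exists (e v) => //; rewrite mem_filter e_self /=.
  by rewrite /e -(nth_rrh Hv) mem_nth // size_rrh ltnS.
- by apply: leq_trans (size_e_le v) _; rewrite ltnS (leq_trans Hv).
move=> y /mapP [x]; rewrite mem_filter => /andP [Hvx Hx] ->.
move/(nthP [::]): Hx => [i]; rewrite size_rrh ltnS => Hi Hxi.
have Hxe : x = e i by rewrite -Hxi nth_rrh.
by rewrite Hxe mem_e_size // -Hxe.
Qed.

Lemma size_e1 k : (size (e k) == 1) = (k == 0).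
Proof.
case: k => [|k] //; rewrite eS size_rcons eqSS.
by have := size_e_pos (c k); case: (size _).
Qed.

Lemma Rk2_rrh n : Rk 2 (rrh n c) = count (fun j => c j == 0) (iota 0 n).
Proof.
rewrite /Rk size_rrh.
rewrite (@eq_in_count _ _ (fun v => size (e v) == 2)); last first.
  by move=> v; rewrite mem_iota add0n ltnS => /andP [_ Hv]; rewrite vrank_e.
rewrite /= -(addn0 1) iotaDl count_map.
by apply: eq_count => j /=; rewrite add1n eS size_rcons eqSS size_e1.
Qed.
End Hyp.
Section Perm.
Variable m : nat.
Implicit Types c : {ffun 'I_m -> 'I_m.+1}.

Definition aa c (i : 'I_m) : 'I_m :=
  if val (c i) == 0 then i else insubd i (val (c i)).-1.

Fixpoint Pk c k : {perm 'I_m} :=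
  match k with
  | 0 => 1
  | k'.+1 => if insub k' is Some i then (tperm i (aa c i) * Pk c k')%g else Pk c k'
  end.

Definition zc c (j : nat) := choice_seq [ffun i => nat_of_ord (c i)] j == 0.

Lemma PkS c k (Hk : k < m) :
  Pk c k.+1 = (tperm (Ordinal Hk) (aa c (Ordinal Hk)) * Pk c k)%g.
Proof. by rewrite /= insubT. Qed.

Lemma zcE c k (Hk : k < m) : zc c k = (val (c (Ordinal Hk)) == 0).
Proof. by rewrite /zc /choice_seq insubT ffunE. Qed.


Lemma aa_le c (hv : forall i, c i <= i) i : aa c i <= i.
Proof.
rewrite /aa; case: eqP => // Hc.
rewrite /insubd; case: insubP => [u _ ->|] //=.
exact: leq_trans (leq_pred _) (hv i).
Qed.

Lemma aa_val c (hv : forall i, c i <= i) i : val (c i) != 0 -> val (aa c i) = (val (c i)).-1.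
Proof.
rewrite /aa => /negbTE ->; rewrite /insubd insubT //=.
exact: leq_ltn_trans (leq_pred _) (leq_ltn_trans (hv i) (ltn_ord i)).
Qed.

Lemma aa_eq c (hv : forall i, c i <= i) i : (aa c i == i) = (val (c i) == 0).
Proof.
case H: (val (c i) == 0); first by rewrite /aa H eqxx.
apply/negbTE; rewrite -val_eqE /= aa_val ?H //.
move/negbT: H; rewrite -lt0n => H; by rewrite neq_ltn (leq_trans _ (hv i)) ?ltn_predL.
Qed.

Lemma expg_fix (s : {perm 'I_m}) x n : s x = x -> (s ^+ n)%g x = x.
Proof.
move=> Hs; elim: n => [|n IH]; first by rewrite expg0 perm1.
by rewrite expgSr permM IH Hs.
Qed.

Lemma porbit_fix (s : {perm 'I_m}) x : s x = x -> porbit s x = [set x].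
Proof.
move=> Hs; apply/setP => y; rewrite inE; apply/idP/eqP => [/porbitP [n ->]|->].
  exact: expg_fix.
exact: porbit_id.
Qed.

Lemma Pk_fix c (hv : forall i, c i <= i) k (x : 'I_m) : k <= x -> Pk c k x = x.
Proof.
elim: k => [|k IH] Hx; first by rewrite perm1.
have Hk : k < m := ltn_trans Hx (ltn_ord x).
rewrite PkS permM tpermD ?IH ?(ltnW Hx) //.
  by rewrite -val_eqE /=; apply/eqP => E; move: Hx; rewrite -E ltnn.
rewrite -val_eqE; apply/eqP => E; have := aa_le hv (Ordinal Hk).
by rewrite E /=; move: Hx; lia.
Qed.

Lemma porbits1 : #|porbits (1 : {perm 'I_m})| = m.
Proof.
rewrite /porbits (eq_imset (g := set1)); last by move=> x; rewrite porbit_fix ?perm1.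
by rewrite card_imset ?card_ord //; exact: set1_inj.
Qed.

Lemma Pk_porbits c (hv : forall i, c i <= i) k : k <= m ->
  #|porbits (Pk c k)| + k = m + count (zc c) (iota 0 k).
Proof.
elim: k => [|k IH] Hk; first by rewrite addn0 porbits1 addn0.
have Hk' : k < m := Hk.
have H := porbits_mul_tperm (Pk c k) (Ordinal Hk') (aa c (Ordinal Hk')); simpl in H.
rewrite PkS -[k.+1]addn1 iotaD count_cat add0n.
rewrite [count _ [:: _]]/= addn0 (zcE c Hk') -aa_eq //.
move: H; rewrite porbit_sym porbit_fix ?Pk_fix // inE eq_sym.
have := IH (ltnW Hk); clear IH; case: eqP => [E|E] /=; rewrite ?double0 -?muln2.
  rewrite -E tperm1 mul1g; clear E hv; lia.
clear E hv; move=> H1 H2; move: (#|porbits (tperm _ _ * _)|) H2 => X H2. lia.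
Qed.

Lemma Pk_inj c c' (hv : forall i, c i <= i) (hv' : forall i, c' i <= i) k :
  k <= m -> Pk c k = Pk c' k -> forall i : 'I_m, i < k -> aa c i = aa c' i.
Proof.
elim: k => [|k IH] Hk E i //; have Hk' : k < m := Hk.
have Ea : aa c (Ordinal Hk') = aa c' (Ordinal Hk').
  apply: (@perm_inj _ (Pk c' k.+1)).
  rewrite -{1}E !PkS !permM !tpermR !Pk_fix //.
have E' : Pk c k = Pk c' k.
  move: E; rewrite !PkS Ea => /(congr1 (mulg (tperm (Ordinal Hk') (aa c' (Ordinal Hk'))))).
  by rewrite !mulgA tperm2 !mul1g.
rewrite ltnS leq_eqVlt => /orP [/eqP Ei|]; last exact: IH (ltnW Hk) E' i.
by have -> : i = Ordinal Hk' by apply: val_inj.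
Qed.

Lemma aa_inj c c' (hv : forall i, c i <= i) (hv' : forall i, c' i <= i) :
  (forall i, aa c i = aa c' i) -> c = c'.
Proof.
move=> H; apply/ffunP => i; apply: val_inj.
have E1 := aa_eq hv i; have E2 := aa_eq hv' i; rewrite H in E1.
case Z: (val (c i) == 0).
  by move: E1 E2; rewrite Z => /eqP ->; rewrite eqxx => /esym /eqP; move/eqP: Z => ->.
have Z' : val (c' i) != 0 by rewrite -E2 E1 Z.
move/negbT: Z => Z; have := aa_val hv Z; rewrite H aa_val //.
move: Z Z'; case: (val (c i)) => // a; case: (val (c' i)) => // b /= _ _ ->. done.
Qed.
End Perm.
Lemma foldr_prod (T : finType) (f : T -> nat) :
  foldr muln 1 [seq f x | x : T] = \prod_(x : T) f x.
Proof.
rewrite /image_mem.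
have -> : \prod_(x : T) f x = \prod_(x <- enum T) f x by rewrite big_enum.
by elim: (enum T) => [|x s IH]; rewrite ?big_nil ?big_cons //= IH.
Qed.

Lemma prod_fact m : \prod_(i < m) i.+1 = m`!.
Proof. by elim: m => [|m IH]; rewrite ?big_ord0 // big_ord_recr /= IH factS mulnC. Qed.

Lemma card_le M (i : 'I_M) : #|[pred x : 'I_M | x <= i]| = i.+1.
Proof.
have Hi : i.+1 <= M := ltn_ord i.
have inj : injective (widen_ord Hi) by move=> a b E; apply: val_inj; exact: (congr1 val E).
rewrite -[in RHS](card_ord i.+1) -(card_imset _ inj).
apply: eq_card => x; rewrite inE /=; apply/idP/imsetP => [Hx|[y _ ->]] /=.
  by exists (Ordinal (Hx : x < i.+1)) => //; apply: val_inj.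
by rewrite -ltnS ltn_ord.
Qed.

Lemma card_valid m : #|[set c : {ffun 'I_m -> 'I_m.+1} | valid_choice c]| = m`!.
Proof.
rewrite -prod_fact.
rewrite (eq_card (B := family (fun i : 'I_m => [pred x : 'I_m.+1 | x <= i]))).
  rewrite card_family foldr_prod; apply: eq_bigr => i _.
  by rewrite (card_le (widen_ord (leqnSn m) i)).
move=> c; rewrite inE; apply/forallP/familyP => H i; have := H i; by rewrite inE.
Qed.

Lemma cardS m : #|[set: {perm 'I_m}]| = m`!.
Proof. by rewrite cardsT card_Sn. Qed.

Lemma cs_valid m (c : {ffun 'I_m -> 'I_m.+1}) : valid_choice c ->
  forall j, choice_seq [ffun i => nat_of_ord (c i)] j <= j.
Proof.
move=> /forallP H j; rewrite /choice_seq; case: insubP => [i _ <-|] //.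
by rewrite ffunE; exact: H.
Qed.

Lemma key m r :
  #|[pred c : {ffun 'I_m -> 'I_m.+1} | valid_choice c &&
     (Rk 2 (rrh m (choice_seq [ffun i => nat_of_ord (c i)])) == r)]| = stirling1 m r.
Proof.
pose Phi := fun c : {ffun 'I_m -> 'I_m.+1} => Pk c m.
have Hcount c : valid_choice c ->
    Rk 2 (rrh m (choice_seq [ffun i => nat_of_ord (c i)])) = #|porbits (Phi c)|.
  move=> Hc; have hv : forall i, c i <= i by apply/forallP.
  rewrite Rk2_rrh; last exact: cs_valid.
  have E := Pk_porbits hv (leqnn m).
  apply/eqP; rewrite -(eqn_add2r m) /Phi E addnC; by apply/eqP.
have Hinj : {in [set c | valid_choice c] &, injective Phi}.
  move=> c c'; rewrite !inE => /forallP hv /forallP hv' E.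
  apply: (aa_inj hv hv') => i; exact: (Pk_inj hv hv' (leqnn m) E (ltn_ord i)).
have Himg : Phi @: [set c | valid_choice c] = setT.
  apply/eqP; rewrite eqEcard subsetT /= cardS (card_in_imset Hinj) card_valid.
  by [].
rewrite /stirling1.
have -> : [set s : 'S_m | #|porbits s| == r] =
    Phi @: [set c | valid_choice c &&
        (Rk 2 (rrh m (choice_seq [ffun i => nat_of_ord (c i)])) == r)].
  apply/setP => s; rewrite inE; apply/idP/imsetP.
    move=> Hs; have : s \in Phi @: [set c | valid_choice c] by rewrite Himg inE.
    case/imsetP => c Hc Es; exists c => //; rewrite inE in Hc; rewrite inE Hc Hcount //.
    by rewrite -Es.
  by move=> [c]; rewrite inE => /andP [Hc /eqP <-] ->; rewrite Hcount.
rewrite card_in_imset.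
  by apply: eq_card => c; rewrite inE.
move=> c c' Hc Hc'; apply: Hinj; rewrite inE.
  by move: Hc; rewrite inE => /andP [].
by move: Hc'; rewrite inE => /andP [].
Qed.

Import GRing.Theory.

Theorem mainTheorem7 (N r : nat) : (1 <= N)%N ->
  prob_Rk 2 N r = ((N.-1)`!%:R^-1 * (stirling1 N.-1 r)%:R)%R :> rat.
Proof.
move=> _; rewrite /prob_Rk /rrh_of.
move: (N.-1) => m.
rewrite prodfV -natr_prod prod_fact.
rewrite sumr_const.
by rewrite key mulr_natr.
Qed.
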